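(* For any unit-weight graph $G$, there is a persuasive binary signaling scheme with cost exactly $\mathsf{OPT}^{\mathsf{stable}}$.
   Context: Setting. $V$ is a finite set of $n$ task types and $W$ is a symmetric matrix with entries in $\{0,1\}$ and $W_{v,v}=1$ (the unit-weight graph $G$ has edges $\{u,v\}$, $u\ne v$, with $W_{u,v}=1$). A vector $\theta\in\mathbb{R}_{\ge0}^V$ is feasible if $W\theta\ge\mathbf 1$ coordinatewise, and stable if it is feasible and for every $v$, $\theta_v=\min\{x\ge0: x+\sum_{v'\neq v}W_{v,v'}\theta_{v'}\ge1\}$. $\mathsf{OPT}^{\mathsf{stable}}=\min\{\|\theta\|_1:\theta\text{ stable}\}$. Signaling. There are $n$ agents; the type profile $t=(t_1,\dots,t_n)$ is a uniformly random bijection $[n]\to V$. A signaling scheme with finite signal space $\Sigma\subset[0,1]$ is a map $\varphi$ assigning to each bijection $t$ a distribution $\varphi(t)$ on $\Sigma^V$; given $t$, $s\sim\varphi(t)$ is drawn and agent $i$ privately receives $s_{t_i}$. For agent $i$, a signal $\theta\in\Sigma$ with $\Pr[s_{t_i}=\theta]>0$ and $x\ge0$, let $Q_i(x\mid\theta)=\mathbb{E}\big[x+\sum_{v'\neq t_i}W_{t_i,v'}s_{v'}\,\big|\,s_{t_i}=\theta\big]$. The scheme is persuasive if for every agent $i$ and every such $\theta$: $Q_i(\theta\mid\theta)\ge1$ and $\theta=\min\{x\ge0:Q_i(x\mid\theta)\ge1\}$. Its cost is $\mathbb{E}[\|s\|_1]$. Binary means $|\Sigma|=2$. *)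

(* Defs.v *)
From HB Require Import structures.
From mathcomp Require Import all_boot all_order all_algebra.
From mathcomp Require Import reals.
Set Implicit Arguments. Unset Strict Implicit. Unset Printing Implicit Defensive.
Import Order.TTheory GRing.Theory Num.Theory.
Local Open Scope ring_scope.

Definition is_least (R : realType) (P : R -> Prop) (m : R) : Prop :=
  P m /\ forall x, P x -> m <= x.

Definition unit_weight (R : realType) (V : finType) (W : V -> V -> R) : Prop :=
  (forall u v, W u v = 0 \/ W u v = 1) /\
  (forall u v, W u v = W v u) /\
  (forall v, W v v = 1).

Definition feasible (R : realType) (V : finType) (W : V -> V -> R) (th : V -> R) : Prop :=
  (forall v, 0 <= th v) /\ (forall v, 1 <= \sum_(v' : V) W v v' * th v').

Definition stable (R : realType) (V : finType) (W : V -> V -> R) (th : V -> R) : Prop :=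
  feasible W th /\
  forall v, is_least (fun x => 0 <= x /\ 1 <= x + \sum_(v' : V | v' != v) W v v' * th v') (th v).

Definition l1norm (R : realType) (V : finType) (th : V -> R) : R := \sum_(v : V) `|th v|.

Definition is_OPT_stable (R : realType) (V : finType) (W : V -> V -> R) (c : R) : Prop :=
  is_least (fun y => exists th, stable W th /\ l1norm th = y) c.

(* type profiles: maps agents 'I_n -> V, n = |V|; only bijections have positive mass *)
Definition profile (V : finType) := {ffun 'I_#|V| -> V}.

Definition prior (R : realType) (V : finType) (t : profile V) : R :=
  if injectiveb t then (#|[set t' : profile V | injectiveb t']|%:R)^-1 else 0.

(* A signaling scheme: finite signal index type S, signal values sigma : S -> [0,1]
   (injective, so Sigma = image of sigma has |S| elements), and for every profile t
   a distribution phi t on Sigma^V (represented as {ffun V -> S}). *)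
Definition is_scheme (R : realType) (V S : finType) (sigma : S -> R)
    (phi : profile V -> {ffun {ffun V -> S} -> R}) : Prop :=
  injective sigma /\ (forall a, 0 <= sigma a <= 1) /\
  forall t : profile V, injectiveb t ->
    (forall s, 0 <= phi t s) /\ \sum_(s : {ffun V -> S}) phi t s = 1.

Definition joint (R : realType) (V S : finType)
    (phi : profile V -> {ffun {ffun V -> S} -> R}) (t : profile V) (s : {ffun V -> S}) : R :=
  prior R t * phi t s.

Definition PrSig (R : realType) (V S : finType)
    (phi : profile V -> {ffun {ffun V -> S} -> R}) (i : 'I_#|V|) (a : S) : R :=
  \sum_(t : profile V) \sum_(s : {ffun V -> S}) joint phi t s * (s (t i) == a)%:R.

Definition Qexp (R : realType) (V S : finType) (W : V -> V -> R) (sigma : S -> R)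
    (phi : profile V -> {ffun {ffun V -> S} -> R}) (i : 'I_#|V|) (x : R) (a : S) : R :=
  (\sum_(t : profile V) \sum_(s : {ffun V -> S})
      joint phi t s * (s (t i) == a)%:R *
      (x + \sum_(v' : V | v' != t i) W (t i) v' * sigma (s v'))) / PrSig phi i a.

Definition persuasive (R : realType) (V S : finType) (W : V -> V -> R) (sigma : S -> R)
    (phi : profile V -> {ffun {ffun V -> S} -> R}) : Prop :=
  forall (i : 'I_#|V|) (a : S), 0 < PrSig phi i a ->
    1 <= Qexp W sigma phi i (sigma a) a /\
    is_least (fun x => 0 <= x /\ 1 <= Qexp W sigma phi i x a) (sigma a).

Definition cost (R : realType) (V S : finType) (sigma : S -> R)
    (phi : profile V -> {ffun {ffun V -> S} -> R}) : R :=
  \sum_(t : profile V) \sum_(s : {ffun V -> S}) joint phi t s * l1norm (fun v => sigma (s v)).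

(* Main.v *)
Require Import Defs.
From HB Require Import structures.
From mathcomp Require Import all_boot all_order all_algebra perm fingroup.
From mathcomp Require Import reals ring lra zify.
Set Implicit Arguments. Unset Strict Implicit. Unset Printing Implicit Defensive.
Import Order.TTheory GRing.Theory Num.Theory.

Section Dom.
Variables (V : finType) (adj : rel V).
Hypotheses (adjC : symmetric adj) (adjR : reflexive adj).
Definition dg v := #|[set w | adj v w]|.
Definition indepb (D : {set V}) := [forall u in D, forall w in D, (u != w) ==> ~~ adj u w].

Lemma dg_gt0 v : 0 < dg v.
Proof. by apply/card_gt0P; exists v; rewrite inE adjR. Qed.

Lemma domD (P : {set V}) : exists D : {set V},
  [/\ D \subset P, indepb D &
      forall v, v \in P -> exists2 u, u \in D & adj v u && (dg v <= dg u)].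
Proof.
pose M := #|V|.+1. pose Phi (D : {set V}) := \sum_(u in D) M ^ dg u.
pose Q (D : {set V}) := (D \subset P) && indepb D.
have Q0 : Q set0 by rewrite /Q sub0set; apply/forall_inP => u; rewrite inE.
case: (arg_maxnP Phi Q0) => D /andP[DP Di] Dmax.
exists D; split => // v vP.
case: (boolP [exists u in D, adj v u && (dg v <= dg u)]) => [/exists_inP[u uD h]|/exists_inP Hn]; first by exists u.
exfalso.
pose N := [set u | adj v u]. pose A := D :\: N. pose D' := v |: A.
have vA : v \notin A by rewrite !inE adjR.
have QD' : Q D'.
  apply/andP; split.
    apply/subsetP => x; rewrite in_setU1 => /orP[/eqP->//|]; rewrite !inE => /andP[_ xD].
    exact: (subsetP DP).
  apply/forall_inP => x; rewrite in_setU1 => /orP[/eqP->|xA]; apply/forall_inP => y;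
    rewrite in_setU1 => /orP[/eqP->|yA]; apply/implyP => nxy.
  - by rewrite eqxx in nxy.
  - by move: yA; rewrite !inE => /andP[].
  - by move: xA; rewrite !inE adjC => /andP[].
  - move: xA yA; rewrite !inE => /andP[_ xD] /andP[_ yD].
    by move/forall_inP: Di => /(_ x xD) /forall_inP /(_ y yD) /implyP /(_ nxy).
have := Dmax D' QD'; rewrite /Phi big_setU1 //= [X in _ <= X](big_setID N) /= -/A.
set a := \sum_(i in A) _; set b := \sum_(i in D :&: N) _.
suff : b < M ^ dg v by lia.
have hb : b <= \sum_(i in D :&: N) M ^ (dg v).-1.
  apply: leq_sum => u; rewrite !inE => /andP[uD avu].
  apply: leq_pexp2l => //.
  have : ~~ (dg v <= dg u) by apply/negP => h; apply: Hn; exists u => //; rewrite avu h.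
  by rewrite -ltnNge; have := dg_gt0 v; lia.
rewrite sum_nat_const in hb.
have hc : #|D :&: N| <= #|V| by apply: max_card.
have e : dg v = ((dg v).-1).+1 by rewrite prednK // dg_gt0.
rewrite [X in _ < M ^ X]e expnS.
apply: (leq_ltn_trans hb); rewrite ltn_pmul2r ?expn_gt0 //.
Qed.
End Dom.


Local Open Scope ring_scope.
Section Q.
Variables (R : realType) (V : finType) (W : V -> V -> R).
Hypothesis UW : unit_weight W.
Definition Wth (th : V -> R) v := \sum_w W v w * th w.
Definition stab2 (th : V -> R) := forall v, 0 <= th v /\ 1 <= Wth th v /\ th v * (Wth th v - 1) = 0.
Definition adjW := [rel u w | W u w == 1].
Lemma adjWC : symmetric adjW.
Proof. by move=> u w; rewrite /= (proj1 (proj2 UW)). Qed.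
Lemma adjWR : reflexive adjW.
Proof. by move=> u; rewrite /= (proj2 (proj2 UW)). Qed.
Lemma WE u w : W u w = (adjW u w)%:R.
Proof. by rewrite /=; case: (proj1 UW u w) => ->; rewrite ?eqxx // eq_sym oner_eq0. Qed.
Lemma W_ge0 u w : 0 <= W u w.
Proof. by rewrite WE ler0n. Qed.
Lemma dgE v : (dg adjW v)%:R = \sum_w W v w :> R.
Proof.
have h w : W v w = if adjW v w then 1 else 0 by rewrite WE; case: (adjW v w).
under eq_bigr do rewrite h.
rewrite -big_mkcond /= sumr_const /dg; congr (_ %:R).
by apply: eq_card => w; rewrite inE.
Qed.

Lemma qexists th : stab2 th -> exists q : V -> R,
  [/\ forall u, 0 <= q u <= 1,
      forall u w, u != w -> W u w = 1 -> q u = 0 \/ q w = 0,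
      \sum_u q u = l1norm th &
      #|V|%:R <= \sum_u q u * (dg adjW u)%:R].
Proof.
move=> Hs.
have th0 v : 0 <= th v by have [] := Hs v.
pose P := [set v | th v != 0].
have [D [DP Di Ddom]] := domD adjWC adjWR P.
pose pi v := if [pick u in D | adjW v u && (dg adjW v <= dg adjW u)%N] is Some u then u else v.
have F1 v : th v != 0 -> [/\ pi v \in D, adjW v (pi v) & (dg adjW v <= dg adjW (pi v))%N].
  move=> nz; rewrite /pi; case: pickP => [u /andP[uD /andP[h1 h2]]|none]; first by [].
  have vP : v \in P by rewrite inE.
  have [u uD h] := Ddom v vP.
  by have := none u; rewrite uD h.
pose q u := \sum_(v | pi v == u) th v.
have F2 u : q u != 0 -> u \in D.
  apply: contraR => uD; rewrite /q big1 // => v /eqP piv.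
  apply/eqP; apply: contraR uD => nz; have [? _ _] := F1 v nz; by rewrite -piv.
have F3 u : 0 <= q u by apply: sumr_ge0.
exists q; split.
- move=> u; rewrite F3 /=.
  have [->|nz] := eqVneq (q u) 0; first by [].
  have uD := F2 u nz.
  have thu : th u != 0 by have := subsetP DP u uD; rewrite inE.
  have Wu : Wth th u = 1.
    have [_ [_ e]] := Hs u; move/eqP: e; rewrite mulf_eq0 (negbTE thu) /= subr_eq0.
    by move/eqP.
  rewrite -Wu /q /Wth big_mkcond /=; apply: ler_sum => v _.
  case: ifP => [/eqP piv|_]; last by rewrite mulr_ge0 // W_ge0.
  have [->|nzv] := eqVneq (th v) 0; first by rewrite mulr0.
  have [_ a _] := F1 v nzv; rewrite piv in a.
  have -> : W u v = 1 by rewrite (proj1 (proj2 UW)); exact/eqP.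
  by rewrite mul1r.
- move=> u w uw Wuw.
  have [->|nu] := eqVneq (q u) 0; first by left.
  have [->|nw] := eqVneq (q w) 0; first by right.
  exfalso; move/forall_inP: Di => /(_ u (F2 u nu)) /forall_inP /(_ w (F2 w nw)) /implyP /(_ uw).
  by rewrite /= Wuw eqxx.
- rewrite /l1norm [RHS](partition_big pi xpredT) //=.
  by apply: eq_bigr => u _; apply: eq_bigr => v _; rewrite ger0_norm.
- have -> : \sum_u q u * (dg adjW u)%:R = \sum_v th v * (dg adjW (pi v))%:R.
    rewrite [RHS](partition_big pi xpredT) //=.
    apply: eq_bigr => u _; rewrite /q mulr_suml; apply: eq_bigr => v /eqP -> //.
  apply: (@le_trans _ _ (\sum_v th v * (dg adjW v)%:R)).
    have -> : \sum_v th v * (dg adjW v)%:R = \sum_w Wth th w.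
      rewrite /Wth exchange_big /=; apply: eq_bigr => v _.
      by rewrite dgE mulr_sumr; apply: eq_bigr => w _; rewrite mulrC (proj1 (proj2 UW)).
    have -> : (#|V|%:R : R) = \sum_(w : V) 1 by rewrite sumr_const.
    by apply: ler_sum => w _; have [_ []] := Hs w.
  apply: ler_sum => v _.
  have [->|nzv] := eqVneq (th v) 0; first by rewrite !mul0r.
  have [_ _ h] := F1 v nzv.
  by rewrite ler_wpM2l // ler_nat.
Qed.
End Q.
Section Prior.
Variables (R : realType) (V : finType).
Local Notation prior := (prior R).
Local Notation n := #|V|.

Lemma prior_sum1 : \sum_(t : profile V) prior t = 1.
Proof.
set N := #|[set t' : profile V | injectiveb t']|.
have t0inj : injectiveb ([ffun k : 'I_#|V| => enum_val k] : profile V).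
  by apply/injectiveP => x y; rewrite !ffunE => /enum_val_inj.
have N0 : (N%:R : R) != 0.
  rewrite pnatr_eq0 -lt0n; apply/card_gt0P; eexists; rewrite inE; exact: t0inj.
rewrite /prior -big_mkcond /= sumr_const.
have -> : #|[pred t : profile V | injectiveb t]| = N by apply: eq_card => t; rewrite inE.
by rewrite -[_ *+ N]mulr_natr mulVf.
Qed.

Definition swp (i j : 'I_#|V|) (t : profile V) : profile V := [ffun k => t (tperm i j k)].
Lemma swpK i j : involutive (swp i j).
Proof. by move=> t; apply/ffunP => k; rewrite !ffunE tpermK. Qed.
Lemma swp_inj i j (t : profile V) : injectiveb t -> injectiveb (swp i j t).
Proof.
move/injectiveP => ti; apply/injectiveP => x y; rewrite !ffunE => /ti.
exact: (can_inj (tpermK i j)).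
Qed.
Lemma prior_swp i j (t : profile V) : prior (swp i j t) = prior t.
Proof.
rewrite /prior; case: (boolP (injectiveb t)) => h.
  by rewrite swp_inj.
case: (boolP (injectiveb (swp i j t))) => // h'.
by have := swp_inj i j h'; rewrite swpK (negbTE h).
Qed.

Lemma sum_inj (h : V -> R) (t : profile V) : injectiveb t ->
  \sum_(j : 'I_#|V|) h (t j) = \sum_v h v.
Proof.
move/injectiveP => ti.
have e : [set t x | x in [set: 'I_#|V|]] = [set: V].
  apply/eqP; rewrite eqEcard subsetT /= cardsT card_imset // cardsT card_ord //.
transitivity (\sum_(v in [set: V]) h v); last by apply: eq_bigl => v; rewrite in_setT.
rewrite -e big_imset /=; last by move=> x y _ _; exact: ti.
by apply: eq_bigl => j; rewrite in_setT.
Qed.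

Lemma prior_marg (h : V -> R) (i : 'I_#|V|) :
  \sum_(t : profile V) prior t * h (t i) = (\sum_v h v) / n%:R.
Proof.
have n0 : (n%:R : R) != 0 by rewrite pnatr_eq0 -lt0n; apply: (leq_ltn_trans _ (ltn_ord i)).
have sym j : \sum_(t : profile V) prior t * h (t i) = \sum_(t : profile V) prior t * h (t j).
  rewrite (reindex_inj (can_inj (swpK i j))) /=.
  by apply: eq_bigr => t _; rewrite prior_swp ffunE tpermL.
have : \sum_(j : 'I_#|V|) \sum_(t : profile V) prior t * h (t j) = \sum_v h v.
  rewrite exchange_big /=.
  rewrite -[RHS]mul1r -prior_sum1 mulr_suml; apply: eq_bigr => t _.
  rewrite -mulr_sumr; rewrite /prior; case: ifP => hi; last by rewrite !mul0r.
  by rewrite sum_inj.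
under eq_bigr do rewrite -sym.
rewrite sumr_const card_ord => <-.
by rewrite -[X in X / _]mulr_natr mulfK.
Qed.
End Prior.

Lemma QexpE (R : realType) (V S : finType) (W : V -> V -> R) (sigma : S -> R)
    (phi : profile V -> {ffun {ffun V -> S} -> R}) i x a :
  0 < PrSig phi i a -> Qexp W sigma phi i x a = x + Qexp W sigma phi i 0 a.
Proof.
move=> hP; rewrite /Qexp.
set N0 := (X in X / _ = _ + _ / _); set N1 := (X in _ = _ + X / _).
have -> : N0 = x * PrSig phi i a + N1.
  rewrite /N0 /N1 /PrSig mulr_sumr -big_split; apply: eq_bigr => t _.
  rewrite mulr_sumr -big_split; apply: eq_bigr => s _; by rewrite add0r mulrDr [_ * x]mulrC.
by rewrite mulrDl mulfK // gt_eqF.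
Qed.

Section Scheme.
Variables (R : realType) (V : finType) (W : V -> V -> R) (q : V -> R).
Hypothesis UW : unit_weight W.
Hypothesis hq01 : forall u, 0 <= q u <= 1.
Hypothesis hqind : forall u w, u != w -> W u w = 1 -> q u = 0 \/ q w = 0.
Hypothesis hqdg : #|V|%:R <= \sum_u q u * (dg (adjW W) u)%:R.

Definition Pq : {ffun {ffun V -> bool} -> R} :=
  [ffun s : {ffun V -> bool} => \prod_v (if s v then q v else 1 - q v)].
Definition sigb (b : bool) : R := b%:R.
Definition phiq : profile V -> {ffun {ffun V -> bool} -> R} := fun _ => Pq.

Lemma Pq_ge0 s : 0 <= Pq s.
Proof.
rewrite ffunE; apply: prodr_ge0 => v _; have /andP[h1 h2] := hq01 v.
by case: (s v) => //; rewrite subr_ge0.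
Qed.

Lemma prod_sum (F : V -> bool -> R) :
  \sum_(s : {ffun V -> bool}) \prod_v F v (s v) = \prod_v (F v true + F v false).
Proof. by rewrite -bigA_distr_bigA; apply: eq_bigr => v _; rewrite big_bool. Qed.

Lemma Pq_sum1 : \sum_s Pq s = 1.
Proof.
under eq_bigr do rewrite ffunE.
by rewrite (prod_sum (fun v b => if b then q v else 1 - q v)) big1 // => v _; rewrite addrC subrK.
Qed.

Lemma Pq_marg u : \sum_s Pq s * (s u)%:R = q u.
Proof.
have e s : Pq s * (s u)%:R = \prod_v ((if s v then q v else 1 - q v) *
                                      (if v == u then (s v)%:R else 1)).
  rewrite ffunE big_split /=; congr (_ * _).
  by rewrite (bigD1 u) //= eqxx big1 ?mulr1 // => v /negbTE ->.
under eq_bigr do rewrite e.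
rewrite (prod_sum (fun v b => (if b then q v else 1 - q v) * (if v == u then b%:R else 1))) (bigD1 u) //= eqxx big1 ?mulr1 ?mulr0 ?addr0 //.
by move=> v /negbTE ->; rewrite !mulr1 addrC subrK.
Qed.

Lemma Pq_supp s u : Pq s != 0 -> s u -> q u != 0.
Proof.
rewrite ffunE (bigD1 u) //= => + su; rewrite su; apply: contraNneq => ->.
by rewrite mul0r.
Qed.

Lemma Pq_ind s u w : Pq s != 0 -> s u -> s w -> u != w -> W u w = 0.
Proof.
move=> nz su sw uw; case: (proj1 UW u w) => // h1.
by case: (hqind uw h1) => h; [move: (Pq_supp nz su)|move: (Pq_supp nz sw)]; rewrite h eqxx.
Qed.

Lemma Sv0 s v : Pq s != 0 -> s v -> \sum_(w | w != v) W v w * (s w)%:R = 0.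
Proof.
move=> nz sv; apply: big1 => w wv; case sw: (s w); last by rewrite mulr0.
by rewrite (Pq_ind nz sv sw) ?mul0r // eq_sym.
Qed.

Lemma joint_marg (F : V -> {ffun V -> bool} -> R) (i : 'I_#|V|) :
  \sum_(t : profile V) \sum_s joint phiq t s * F (t i) s =
  (\sum_v \sum_s Pq s * F v s) / #|V|%:R.
Proof.
rewrite -(prior_marg _ i); apply: eq_bigr => t _; rewrite mulr_sumr; apply: eq_bigr => s _.
by rewrite /joint /phiq mulrA.
Qed.

Lemma PrSigE i a : PrSig phiq i a = (\sum_v \sum_s Pq s * (s v == a)%:R) / #|V|%:R.
Proof. exact: joint_marg. Qed.

Lemma Num0E i a : \sum_(t : profile V) \sum_s joint phiq t s * (s (t i) == a)%:R *
      (0 + \sum_(v' | v' != t i) W (t i) v' * sigb (s v')) =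
  (\sum_v \sum_s Pq s * ((s v == a)%:R * \sum_(v' | v' != v) W v v' * (s v')%:R)) / #|V|%:R.
Proof.
rewrite -(joint_marg (fun v s => (s v == a)%:R * \sum_(v' | v' != v) W v v' * (s v')%:R) i).
by apply: eq_bigr => t _; apply: eq_bigr => s _; rewrite add0r mulrA.
Qed.

Lemma pt s : Pq s != 0 ->
  \sum_v (s v == false)%:R * \sum_(w | w != v) W v w * (s w)%:R - \sum_v (s v == false)%:R
  = \sum_w (s w)%:R * (dg (adjW W) w)%:R - #|V|%:R.
Proof.
move=> nz.
have e1 v : (s v == false)%:R * \sum_(w | w != v) W v w * (s w)%:R =
            \sum_w W v w * (s w)%:R - (s v)%:R.
  rewrite [in RHS](bigD1 v) //= (proj2 (proj2 UW)) mul1r addrAC subrr add0r.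
  by case sv: (s v); [rewrite Sv0 // mulr0|rewrite mul1r].
have e2 v : (s v == false)%:R = 1 - (s v)%:R :> R by case: (s v); rewrite ?subrr ?subr0.
under eq_bigr do rewrite e1.
under [X in _ - X = _]eq_bigr do rewrite e2.
rewrite !sumrB.
have -> : \sum_(i : V) (1 : R) = #|V|%:R by rewrite sumr_const.
have -> : \sum_v \sum_w W v w * (s w)%:R = \sum_w (s w)%:R * (dg (adjW W) w)%:R.
  rewrite exchange_big /=; apply: eq_bigr => w _.
  rewrite (dgE UW) mulr_sumr; apply: eq_bigr => v _.
  by rewrite mulrC (proj1 (proj2 UW)).
ring.
Qed.

Lemma G_ge_m : \sum_v \sum_s Pq s * (s v == false)%:R <=
  \sum_v \sum_s Pq s * ((s v == false)%:R * \sum_(v' | v' != v) W v v' * (s v')%:R).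
Proof.
rewrite -subr_ge0 exchange_big [X in _ <= _ - X]exchange_big /= -sumrB.
have -> : \sum_s (\sum_v Pq s * ((s v == false)%:R * \sum_(v' | v' != v) W v v' * (s v')%:R) -
     \sum_v Pq s * (s v == false)%:R) =
    \sum_s Pq s * (\sum_w (s w)%:R * (dg (adjW W) w)%:R - #|V|%:R).
  apply: eq_bigr => s _; have [->|nz] := eqVneq (Pq s) 0.
    rewrite mul0r; under eq_bigr do rewrite mul0r.
    by under [X in _ - X]eq_bigr do rewrite mul0r; rewrite big1_eq subrr.
  by rewrite -pt // mulrBr !mulr_sumr.
under eq_bigr do rewrite mulrBr.
rewrite sumrB -mulr_suml Pq_sum1 mul1r.
under eq_bigr do rewrite mulr_sumr.
rewrite exchange_big /= subr_ge0.
apply: (le_trans hqdg); rewrite le_eqVlt; apply/orP; left; apply/eqP.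
apply: eq_bigr => w _; rewrite -Pq_marg mulr_suml; apply: eq_bigr => s _.
by rewrite mulrA.
Qed.

Lemma persuasive_q : persuasive W sigb phiq.
Proof.
move=> i a hP.
have hQ : forall x, Qexp W sigb phiq i x a = x + Qexp W sigb phiq i 0 a.
  by move=> x; exact: QexpE.
case: a hP hQ => hP hQ.
- have K : Qexp W sigb phiq i 0 true = 0.
    rewrite /Qexp Num0E.
    rewrite [X in X / _ / _]big1 ?mul0r // => v _; apply: big1 => s _.
    have [->|nz] := eqVneq (Pq s) 0; first by rewrite mul0r.
    case sv: (s v) => /=; first by rewrite Sv0 // !mulr0.
    by rewrite mul0r mulr0.
  have e1 : sigb true = 1 by [].
  rewrite e1; split; first by rewrite hQ K addr0.
  split; first by split => //; rewrite hQ K addr0.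
  by move=> x [x0]; rewrite hQ K addr0.
- have K : 1 <= Qexp W sigb phiq i 0 false.
    rewrite /Qexp Num0E ler_pdivlMr // mul1r PrSigE.
    apply: ler_wpM2r; first by rewrite invr_ge0 ler0n.
    exact: G_ge_m.
  have e0 : sigb false = 0 by [].
  rewrite e0; split; first by rewrite hQ add0r.
  split; first by split => //; rewrite hQ add0r.
  by move=> x [].
Qed.

Lemma scheme_q : is_scheme sigb phiq.
Proof.
split; first by move=> [] [] //= /eqP; rewrite ?oner_eq0 // eq_sym oner_eq0.
split; first by move=> [] /=; rewrite ?ler01 ?lexx.
by move=> t _; split; [exact: Pq_ge0 | exact: Pq_sum1].
Qed.

Lemma cost_q : cost sigb phiq = \sum_u q u.
Proof.
rewrite /cost.
under eq_bigr do under eq_bigr do rewrite /joint -mulrA.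
under eq_bigr do rewrite -mulr_sumr.
rewrite /phiq -mulr_suml prior_sum1 mul1r /l1norm.
under eq_bigr do rewrite mulr_sumr.
rewrite exchange_big; apply: eq_bigr => v _; rewrite -Pq_marg; apply: eq_bigr => s _.
by rewrite ger0_norm // /sigb ler0n.
Qed.
End Scheme.

Lemma stab2_exists (R : realType) (V : finType) (W : V -> V -> R) :
  unit_weight W -> exists th, stab2 W th.
Proof.
move=> UW.
have [D [_ Di Ddom]] := domD (adjWC UW) (adjWR UW) [set: V].
exists (fun v => (v \in D)%:R) => v; split; first by rewrite ler0n.
have [u uD /andP[avu _]] := Ddom v (in_setT v).
split.
  rewrite /Wth (bigD1 u) //= uD mulr1.
  have -> : W v u = 1 by exact/eqP.
  rewrite lerDl sumr_ge0 // => w _; by rewrite mulr_ge0 ?ler0n ?(W_ge0 UW).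
case vD: (v \in D); last by rewrite mul0r.
rewrite mul1r /Wth (bigD1 v) //= vD (proj2 (proj2 UW)) mulr1 big1 ?addr0 ?subrr // => w wv.
case wD: (w \in D); last by rewrite mulr0.
move/forall_inP: Di => /(_ v vD) /forall_inP /(_ w wD) /implyP.
rewrite eq_sym wv => /(_ isT) /= h.
by case: (proj1 UW v w) => e; rewrite e ?mul0r //; rewrite e eqxx in h.
Qed.

From mathcomp Require Import all_classical all_reals all_analysis.
Local Open Scope classical_set_scope.
Section T.
Variables (R : realType) (V : finType).
Definition KK : V -> topologicalType := fun _ => (R : realType)^o.
Definition TT := prod_topology KK.
Lemma cont_proj (v : V) : continuous (fun f : TT => (f v : R^o)).
Proof. exact: (@proj_continuous V KK v). Qed.
Lemma cont_sum (I : Type) (r : seq I) (F : I -> TT -> R^o) :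
  (forall i, continuous (F i)) -> continuous (fun f : TT => \sum_(i <- r) F i f).
Proof.
move=> HF; elim: r => [|a r IH].
  under eq_fun do rewrite big_nil. exact: cst_continuous.
under eq_fun do rewrite big_cons.
move=> x; apply: continuousD; [exact: HF| exact: IH].
Qed.
Lemma cpt01 : compact [set f : TT | forall v, (`[(0:R), 1]%classic : set R^o) (f v)].
Proof. apply: (@tychonoff V KK (fun _ => `[(0:R), 1]%classic)) => v. exact: segment_compact. Qed.

Variable W : V -> V -> R.
Local Notation Wth := (Wth W).
Local Notation stab2 := (stab2 W).

Hypothesis UW : unit_weight W.

Lemma WthE th v : Wth th v = th v + \sum_(w | w != v) W v w * th w.
Proof. by rewrite /Wth (bigD1 v) //= (proj2 (proj2 UW)) mul1r. Qed.

Lemma stableE th : stable W th <-> stab2 th.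
Proof.
split.
  move=> [[H0 H1] H2] v; split => //; split; first exact: H1.
  have [[_ Hs] Hmin] := H2 v; rewrite WthE; have := H0 v.
  set S := \sum_(w | w != v) _ in Hs Hmin *; move=> t0.
  have [->|/eqP nz] := eqVneq (th v) 0; first by rewrite mul0r.
  case: (lerP 0 (1 - S)) => h.
    have := Hmin (1 - S); rewrite subrK => /(_ (conj h (lexx _))) le.
    have -> : th v + S - 1 = 0 by lra.
    by rewrite mulr0.
  have := Hmin 0; rewrite add0r => /(_ (conj (lexx _) _)).
  have hS : 1 <= S by lra.
  move=> /(_ hS) le; exfalso; apply: nz; lra.
move=> H; split.
  by split => v; have [? [? _]] := H v.
move=> v; have [H0 [H1 H2]] := H v; move: H1 H2; rewrite WthE.
set S := \sum_(w | w != v) _ => H1 H2; split => //.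
move=> x [x0 hx]; move/eqP: H2; rewrite mulf_eq0 => /orP[/eqP->//|].
by rewrite subr_eq0 => /eqP e; lra.
Qed.

Lemma cont_mul (f g : TT -> R^o) : continuous f -> continuous g -> continuous (fun th => f th * g th).
Proof. by move=> hf hg x; apply: continuousM; [exact: hf|exact: hg]. Qed.
Lemma cont_sub (f g : TT -> R^o) : continuous f -> continuous g -> continuous (fun th => f th - g th).
Proof. by move=> hf hg x; apply: continuousB; [exact: hf|exact: hg]. Qed.

Lemma cont_Wth v : continuous (fun th : TT => (Wth th v : R^o)).
Proof.
rewrite /Wth; apply: cont_sum => w x.
by apply: continuousM; [exact: (@cst_continuous TT R^o (W v w)) | exact: cont_proj].
Qed.

Lemma closed_stab : closed [set th : TT | stab2 th].
Proof.
have -> : [set th : TT | stab2 th] = \bigcap_(v in setT)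
   ( ((fun th : TT => (th v : R^o)) @^-1` [set x : R^o | 0 <= x]) `&`
     ((fun th : TT => (Wth th v : R^o)) @^-1` [set x : R^o | 1 <= x]) `&`
     ((fun th : TT => (th v * (Wth th v - 1) : R^o)) @^-1` [set x : R^o | x = 0]) ).
  rewrite predeqE => th; split.
    by move=> H v _; have [? [? ?]] := H v.
  by move=> H v; have [[? ?] ?] := H v I.
apply: closed_bigI => v _; apply: closedI; [apply: closedI|].
- apply: preimage_closed; last exact: closed_ge.
  by move=> x _; exact: cont_proj.
- apply: preimage_closed; last exact: closed_ge.
  by move=> x _; exact: cont_Wth.
- apply: preimage_closed; last exact: closed_eq.
  move=> x _.
  have H := cont_mul (@cont_proj v) (cont_sub (@cont_Wth v) (@cst_continuous TT R^o 1)). exact: H.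
Qed.

Lemma stab2_01 th : stab2 th -> forall v, 0 <= th v <= 1.
Proof.
move=> H v; have Hs : stable W th by apply/stableE.
have [[F0 _] Hl] := Hs; have [[h0 _] Hm] := Hl v.
rewrite h0 /=; apply: Hm; split => //; rewrite lerDl sumr_ge0 // => w _.
by have := F0 w; case: (proj1 UW v w) => -> h; rewrite ?mul0r ?mul1r.
Qed.

Lemma exists_min : (exists th, stable W th) ->
  exists th, stable W th /\ forall th', stable W th' -> l1norm th <= l1norm th'.
Proof.
move=> [th0 Hth0].
have A0 : [set th : TT | stab2 th] !=set0 by exists th0; apply/stableE.
have cA : compact [set th : TT | stab2 th].
  apply: (subclosed_compact closed_stab cpt01) => th /stab2_01 H v.
  by rewrite /= in_itv /=; exact: H.
have cf : {within [set th : TT | stab2 th], continuous (fun th : TT => (l1norm th : R^o))}.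
  apply: continuous_subspaceT; rewrite /l1norm; apply: cont_sum => w x.
  apply: continuous_comp; first exact: cont_proj.
  exact: norm_continuous.
have [c cA' cmin] := compact_EVT_min A0 cA cf.
exists c; split; first by apply/stableE; rewrite inE in cA'.
by move=> th' /stableE h'; apply: cmin; rewrite inE.
Qed.
End T.

Local Close Scope classical_set_scope.

Theorem theorem5p5 (R : realType) (V : finType) (W : V -> V -> R) :
  unit_weight W ->
  exists c : R, is_OPT_stable W c /\
    exists (S : finType) (sigma : S -> R) (phi : profile V -> {ffun {ffun V -> S} -> R}),
      [/\ is_scheme sigma phi, #|S| = 2%N, persuasive W sigma phi & cost sigma phi = c].
Proof.
move=> UW.
have ex : exists th, stable W th.
  by have [th h] := stab2_exists UW; exists th; apply/(stableE UW).
have [th [Hst Hmin]] := exists_min UW ex.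
have H2 : stab2 W th by apply/(stableE UW).
have [q [hq01 hqind hqsum hqdg]] := qexists UW H2.
exists (l1norm th); split.
  split; first by exists th.
  by move=> y [th' [h' <-]]; apply: Hmin.
exists bool, (@sigb R), (phiq q); split.
- exact: scheme_q.
- by rewrite card_bool.
- exact: (persuasive_q UW hqind hqdg).
- by rewrite (cost_q q).
Qed.
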